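(* For every homogeneous polynomial $f(\mathbf{x}) \in \mathbb{C}[x_1,\ldots,x_n]$, we have $\mathrm{commRO}(f) \leq \mathrm{DPD}(f)$.
   Context: For $f \in \mathbb{C}[x_1,\ldots,x_n]$, the dimension of partial derivatives is $\mathrm{DPD}(f) := \dim_{\mathbb{C}} \mathrm{span}_{\mathbb{C}}\{\partial_{\mathbf{e}} f : \mathbf{e} \in \mathbb{N}^n\}$, where $\partial_{\mathbf{e}} f$ is the partial derivative of $f$ with respect to the monomial $x_1^{e_1}\cdots x_n^{e_n}$ (so $\mathbf{e}=\mathbf{0}$ gives $f$ itself). A read-once oblivious ABP (ROABP) of width $w$ computing an $n$-variate polynomial $f$ of individual degree at most $d$ consists of a permutation $\sigma$ of $[n]$, matrices $A_{j,k} \in \mathbb{C}^{w\times w}$ for $j\in[n]$, $0\le k\le d$, and vectors $\mathbf{u},\mathbf{v}\in\mathbb{C}^w$ such that $f(\mathbf{x}) = \mathbf{u}^{T} M_{\sigma(1)}(x_{\sigma(1)}) \cdots M_{\sigma(n)}(x_{\sigma(n)}) \mathbf{v}$, where $M_j(x_j) = \sum_{k=0}^{d} A_{j,k} x_j^k$. The $A_{j,k}$ are its coefficient matrices. A commutative ROABP is an ROABP whose coefficient matrices all pairwise commute. $\mathrm{commRO}(f)$ denotes the smallest $w$ such that some width-$w$ commutative ROABP computes $f$. *)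

(* Defs.v *)
From HB Require Import structures.
From mathcomp Require Import all_boot all_order all_algebra.
From mathcomp Require Import reals.
From mathcomp Require Import fingroup perm complex.
From mathcomp Require Import mpoly.
From Stdlib Require Import ClassicalEpsilon.

Set Implicit Arguments.
Unset Strict Implicit.
Unset Printing Implicit Defensive.

Import Order.TTheory GRing.Theory Num.Theory.
Local Open Scope ring_scope.

Definition Cx (R : realType) : fieldType := complex R.

(* Least natural number satisfying P, or 0 if there is none. *)
Definition natmin (P : nat -> Prop) : nat :=
  let Pb := fun k => if excluded_middle_informative (P k) then true else false in
  match excluded_middle_informative (exists k, Pb k) with
  | left h => ex_minn h
  | right _ => 0%N
  end.

Section Defs.
Variables (F : fieldType) (n : nat).
Implicit Types (f g : {mpoly F[n]}).

Definition in_span (b : seq {mpoly F[n]}) (v : {mpoly F[n]}) : Prop :=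
  exists c : 'I_(size b) -> F, v = \sum_(i < size b) c i *: b`_i.

Definition lin_indep (b : seq {mpoly F[n]}) : Prop :=
  forall c : 'I_(size b) -> F,
    \sum_(i < size b) c i *: b`_i = 0 -> forall i, c i = 0.

Definition pderiv (e : 'X_{1..n}) f : {mpoly F[n]} := mderivm e f.

Definition is_pd_basis f (b : seq {mpoly F[n]}) : Prop :=
  [/\ lin_indep b,
      forall i : 'I_(size b), exists (s : seq (multinom n)) (c : 'I_(size s) -> F),
           b`_i = \sum_(j < size s) c j *: pderiv (nth 0%MM s j) f
    & forall e : 'X_{1..n}, in_span b (pderiv e f)].

Definition DPD f : nat := natmin (fun d => exists b, size b = d /\ is_pd_basis f b).

Definition roabp_layer (w d : nat) (A : 'I_n -> 'I_d.+1 -> 'M[F]_w) (j : 'I_n)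
  : 'M[{mpoly F[n]}]_w :=
  \matrix_(a, b) \sum_(k < d.+1) (A j k a b)%:MP * 'X_j ^+ k.

(* The polynomial u^T M_{s(1)}(x_{s(1)}) ... M_{s(n)}(x_{s(n)}) v *)
Definition roabp_poly (w d : nat) (s : 'S_n) (A : 'I_n -> 'I_d.+1 -> 'M[F]_w)
  (u v : 'cV[F]_w) : {mpoly F[n]} :=
  ((map_mx (fun c => c%:MP) u)^T
     *m foldr (fun M acc => M *m acc) 1%:M
          [seq roabp_layer A (s j) | j <- enum 'I_n]
     *m map_mx (fun c => c%:MP) v) ord0 ord0.

Definition comm_roabp_computes f (w : nat) : Prop :=
  exists (d : nat) (s : 'S_n) (A : 'I_n -> 'I_d.+1 -> 'M[F]_w) (u v : 'cV[F]_w),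
    (forall j k j' k', A j k *m A j' k' = A j' k' *m A j k) /\
    roabp_poly s A u v = f.

Definition commRO f : nat := natmin (comm_roabp_computes f).

End Defs.

(* Main.v *)
Require Import Defs.
From HB Require Import structures.
From mathcomp Require Import all_boot all_order all_algebra.
From mathcomp Require Import reals complex mpoly.
From Stdlib Require Import ClassicalEpsilon.
From mathcomp Require Import fingroup perm ring.

Set Implicit Arguments.
Unset Strict Implicit.
Unset Printing Implicit Defensive.
Import Order.TTheory GRing.Theory Num.Theory.
Local Open Scope ring_scope.

Lemma natminP (Q : nat -> Prop) k : Q k -> Q (natmin Q) /\ (natmin Q <= k)%N.
Proof.
move=> Qk; rewrite /natmin; case: excluded_middle_informative => [h|hn]; last first.
  by exfalso; apply: hn; exists k; case: excluded_middle_informative.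
case: ex_minnP => m Pm minm; split.
  by move: Pm; case: excluded_middle_informative.
by apply: minm; case: excluded_middle_informative.
Qed.

Lemma fchoice (A B : Type) (Rl : A -> B -> Prop) :
  (forall x, exists y, Rl x y) -> exists f : A -> B, forall x, Rl x (f x).
Proof.
move=> h; exists (fun x => proj1_sig (constructive_indefinite_description _ (h x))).
by move=> x; case: constructive_indefinite_description.
Qed.

Section Span.
Variables (F : fieldType) (n : nat).
Local Notation P := {mpoly F[n]}.

Lemma in_span0 (b : seq P) : in_span b 0.
Proof. by exists (fun=> 0); rewrite big1 // => i _; rewrite scale0r. Qed.

Lemma in_spanD (b : seq P) x y : in_span b x -> in_span b y -> in_span b (x + y).
Proof.
move=> [c1 ->] [c2 ->]; exists (fun i => c1 i + c2 i).
by rewrite -big_split; apply: eq_bigr => i _; rewrite scalerDl.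
Qed.

Lemma in_spanZ (b : seq P) a x : in_span b x -> in_span b (a *: x).
Proof.
move=> [c ->]; exists (fun i => a * c i).
by rewrite scaler_sumr; apply: eq_bigr => i _; rewrite scalerA.
Qed.

Lemma in_span_sum (b : seq P) (I : Type) (r : seq I) (Pr : pred I) (G : I -> P) :
  (forall i, Pr i -> in_span b (G i)) -> in_span b (\sum_(i <- r | Pr i) G i).
Proof.
move=> h; elim/big_rec: _ => [|i x Pi hx]; first exact: in_span0.
exact: in_spanD (h _ Pi) hx.
Qed.

Lemma in_span_mem (b : seq P) (i : 'I_(size b)) : in_span b b`_i.
Proof.
exists (fun j => (j == i)%:R); rewrite (bigD1 i) //= eqxx scale1r big1 ?addr0 //.
by move=> j /negbTE ->; rewrite scale0r.
Qed.

Lemma in_span_cons (b : seq P) x y : in_span b y -> in_span (x :: b) y.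
Proof.
move=> [c ->]; exists (fun j : 'I_(size b).+1 => if unlift ord0 j is Some k then c k else 0).
rewrite big_ord_recl unlift_none scale0r add0r; apply: eq_bigr => i _.
by rewrite liftK.
Qed.

Lemma greedy (S : seq P) : exists b : seq P,
  [/\ lin_indep b, forall i : 'I_(size b), b`_i \in S & forall x, x \in S -> in_span b x].
Proof.
elim: S => [|x S [b [hi hm hs]]].
  by exists [::]; split => // [c _ [] //|[]].
case: (classic (in_span b x)) => hx.
  exists b; split => // [i|y]; first by rewrite inE hm orbT.
  by rewrite inE => /orP [/eqP ->|/hs].
exists (x :: b); split.
- move=> c; rewrite big_ord_recl /= => hc.
  have c0 : c ord0 = 0.
    apply/eqP; apply/negPn/negP => nz; apply: hx.
    exists (fun i => - (c ord0)^-1 * c (lift ord0 i)).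
    apply: (@scalerI _ _ (c ord0)) => //.
    move/eqP: hc; rewrite addr_eq0 => /eqP ->.
    rewrite scaler_sumr -sumrN; apply: eq_bigr => i _.
    by rewrite scalerA mulrA mulrN mulfV // mulN1r scaleNr.
  move: hc; rewrite c0 scale0r add0r => /(hi (fun i => c (lift ord0 i))) h i.
  by case: (unliftP ord0 i) => [j ->|->] //; rewrite h.
- by move=> i; case: (unliftP ord0 i) => [j ->|->]; rewrite inE ?eqxx // hm orbT.
- move=> y; rewrite inE => /orP [/eqP ->|/hs]; last exact: in_span_cons.
  exact: (in_span_mem (ord0 : 'I_(size (x :: b)))).
Qed.

End Span.
Section Basis.
Variables (F : fieldType) (n : nat).
Local Notation P := {mpoly F[n]}.

Lemma deriv_big (f : P) e : (msize f <= mdeg e)%N -> pderiv e f = 0.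
Proof.
move=> h; apply/mpolyP => k; rewrite /pderiv mcoeff_mderivm mcoeff0.
have -> : f@_(e + k) = 0; last by rewrite mul0rn.
apply/eqP; rewrite mcoeff_eq0; apply: msize_mdeg_ge.
by rewrite mdegD (leq_trans h) // leq_addr.
Qed.

Lemma basis_exists (f : P) : exists b, is_pd_basis f b.
Proof.
have [b [hi hm hs]] := greedy [seq pderiv (val e) f | e : 'X_{1..n < msize f}].
exists b; split => //.
- move=> i; have /imageP [e _ ->] := hm i.
  exists [:: val e], (fun _ => 1).
  by rewrite big_ord1 scale1r.
- move=> e; case: (ltnP (mdeg e) (msize f)) => h; last first.
    by rewrite deriv_big //; exact: in_span0.
  apply: hs; have -> : e = val (Sub e h : 'X_{1..n < msize f}) by rewrite SubK.
  exact: (image_f (fun e0 : 'X_{1..n < msize f} => pderiv (val e0) f)).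
Qed.

End Basis.
Section Taylor.
Variables (F : fieldType) (n : nat).
Hypothesis Fchar : forall k : nat, (k`!)%:R != 0 :> F.
Local Notation P := {mpoly F[n]}.

Definition inl (l : seq 'I_n) (e : 'X_{1..n}) : bool :=
  [forall i, (e i != 0%N) ==> (i \in l)].

Definition Rf (l : seq 'I_n) (h : P) : P :=
  \sum_(e <- msupp h) (if inl l e then h@_e else 0) *: 'X_[e].

Lemma Rf_coef l h k : (Rf l h)@_k = if inl l k then h@_k else 0.
Proof.
rewrite /Rf raddf_sum /=; case: (boolP (k \in msupp h)) => hk.
  rewrite (bigD1_seq k) ?msupp_uniq //= mcoeffZ mcoeffX eqxx mulr1 big1 ?addr0 //.
  by move=> e ne; rewrite mcoeffZ mcoeffX (negbTE ne) mulr0.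
rewrite big1_seq; last first.
  move=> e /andP [_ he]; rewrite mcoeffZ mcoeffX.
  have -> : (e == k) = false by apply/negbTE/eqP => ek; move: hk; rewrite -ek he.
  by rewrite mulr0.
by rewrite memN_msupp_eq0 //; case: ifP.
Qed.

Lemma coefXM (m : 'X_{1..n}) (p : P) e :
  ('X_[m] * p)@_e = if (m <= e)%MM then p@_(e - m) else 0.
Proof.
rewrite mulrC; case: ifP => hle.
  by rewrite -{1}(submK hle) addmC mcoeffMX.
rewrite {1}[p]mpolyE mulr_suml raddf_sum big1 // => k _.
rewrite /= -scalerAl -mpolyXD mcoeffZ mcoeffX.
have -> : (k + m == e)%MM = false.
  by apply/negbTE/negP => /eqP heq; move: hle; rewrite -heq lem_addl.
by rewrite mulr0.
Qed.

Lemma inl_sub_false l j (e : 'X_{1..n}) k : j \notin l -> (k < e j)%N ->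
  inl l (e - U_(j) *+ k)%MM = false.
Proof.
move=> hj hk; apply/negP => /forallP /(_ j) /implyP H.
move: hj; rewrite H //.
by rewrite mnmBE mulmnE mnm1E eqxx mul1n subn_eq0 -ltnNge.
Qed.

Lemma inl_sub_eq l j (e : 'X_{1..n}) : j \notin l ->
  inl l (e - U_(j) *+ e j)%MM = inl (j :: l) e.
Proof.
move=> hj; apply/forallP/forallP => H i; have /implyP := H i;
  rewrite mnmBE mulmnE mnm1E inE; case: (eqVneq j i) => [<-|ne] /= Hi.
- by rewrite implybT.
- apply/implyP => nz; have := Hi; rewrite mul0n subn0 => /(_ nz).
  by [].
- by rewrite mul1n subnn.
- rewrite mul0n subn0; apply/implyP => /Hi. by [].
Qed.

Lemma taylor l j (h : P) d : j \notin l -> (forall e, h@_e != 0 -> (e j <= d)%N) ->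
  Rf (j :: l) h = \sum_(k < d.+1) 'X_j ^+ k * ((k`!%:R)^-1 *: Rf l (mderivm (U_(j) *+ k) h)).
Proof.
move=> hj hb; apply/mpolyP => e; rewrite Rf_coef raddf_sum /=.
under eq_bigr => k _ do rewrite mpolyXn coefXM mcoeffZ Rf_coef.
case: (leqP (e j) d) => hej.
  rewrite (bigD1 (Ordinal (hej : (e j < d.+1)%N))) //= big1 ?addr0; last first.
    move=> k hk; case: ifP => // hle.
    have kle : (k <= e j)%N.
      by move/mnm_lepP: hle => /(_ j); rewrite mulmnE mnm1E eqxx mul1n.
    have klt : (k < e j)%N.
      rewrite ltn_neqAle kle andbT; apply/eqP => ke; move/eqP: hk; apply.
      by apply: val_inj.
    by rewrite inl_sub_false // mulr0.
  have hle : (U_(j) *+ e j <= e)%MM.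
    by apply/mnm_lepP => i; rewrite mulmnE mnm1E; case: eqP => [->|]; rewrite ?mul1n ?mul0n.
  rewrite hle inl_sub_eq //; case: ifP => _; last by rewrite mulr0.
  rewrite mcoeff_mderivm addmC (submK hle).
  rewrite (bigD1 j) //= big1; last first.
    by move=> i ne; rewrite mulmnE mnm1E eq_sym (negbTE ne) mul0n ffactn0.
  by rewrite mulmnE mnm1E eqxx mul1n ffactnn muln1 -[h@_e *+ _]mulr_natl mulrA mulVf ?mul1r.
rewrite big1; last first.
  move=> k _; case: ifP => // _.
  by rewrite inl_sub_false ?mulr0 // (leq_ltn_trans _ hej) // -ltnS.
case: ifP => // _; case: (eqVneq (h@_e) 0) => // nz.
by have := hb _ nz; rewrite leqNgt hej.
Qed.

End Taylor.
Section Main.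
Variables (F : fieldType) (n : nat).
Hypothesis Fchar : forall k : nat, (k`!)%:R != 0 :> F.
Local Notation P := {mpoly F[n]}.
Variables (f : P) (b : seq P).
Hypothesis hb : is_pd_basis f b.
Local Notation m := (size b).

Definition Bc (c : 'I_m -> F) : P := \sum_(k < m) c k *: b`_k.

Lemma Bc_ext c1 c2 : c1 =1 c2 -> Bc c1 = Bc c2.
Proof. by move=> h; apply: eq_bigr => k _; rewrite h. Qed.

Lemma Bc_inj c1 c2 : Bc c1 = Bc c2 -> c1 =1 c2.
Proof.
case: hb => hi _ _ h k; apply/eqP; rewrite -subr_eq0; apply/eqP.
apply: (hi (fun k => c1 k - c2 k)) => {k}.
rewrite (eq_bigr (fun k => c1 k *: b`_k - c2 k *: b`_k)); last by move=> k _; rewrite scalerBl.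
by rewrite sumrB -/(Bc c1) -/(Bc c2) h subrr.
Qed.

Lemma deriv_span (a : 'I_m) e : in_span b (mderivm e b`_a).
Proof.
case: hb => _ hg hs; have [s [c ->]] := hg a.
rewrite raddf_sum /=; apply: in_span_sum => j _.
by rewrite mderivmZ /pderiv -mderivmDm; apply/in_spanZ/hs.
Qed.

Lemma deriv_span' (j : 'I_n) (a : 'I_m) : exists c, mderiv j b`_a = Bc c.
Proof. by have [c hc] := deriv_span a U_(j); rewrite -mderivmU1m hc; exists c. Qed.

Definition Dc (j : 'I_n) (a : 'I_m) : 'I_m -> F :=
  proj1_sig (constructive_indefinite_description _ (deriv_span' j a)).

Lemma Dc_spec (j : 'I_n) (a : 'I_m) : mderiv j b`_a = Bc (Dc j a).
Proof. by rewrite /Dc; case: constructive_indefinite_description. Qed.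

Definition Dm (j : 'I_n) : 'M[F]_m := \matrix_(k, a) Dc j a k.

Lemma deriv_Bc (j : 'I_n) c : mderiv j (Bc c) = Bc (fun k => \sum_a Dm j k a * c a).
Proof.
rewrite /Bc raddf_sum /=.
under eq_bigr do rewrite mderivZ Dc_spec /Bc scaler_sumr.
rewrite exchange_big /=; apply: eq_bigr => k _; rewrite scaler_suml.
by apply: eq_bigr => a _; rewrite scalerA mxE mulrC.
Qed.

Lemma Dm_comm (j j' : 'I_n) : Dm j *m Dm j' = Dm j' *m Dm j.
Proof.
apply/matrixP => k a.
have h : forall j j', mderiv j (mderiv j' b`_a) = Bc (fun k => (Dm j *m Dm j') k a).
  move=> i i'; rewrite Dc_spec deriv_Bc; apply: Bc_ext => x.
  by rewrite mxE; apply: eq_bigr => y _; rewrite [Dm i' y a]mxE.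
have := h j j'; rewrite mderiv_comm h => /Bc_inj /(_ k).
by move=> ->.
Qed.

Definition bnd (h : P) := forall e, h@_e != 0 -> (mdeg e < msize f)%N.

Lemma bnd0 : bnd 0.
Proof. by move=> e; rewrite mcoeff0 eqxx. Qed.

Lemma bndD x y : bnd x -> bnd y -> bnd (x + y).
Proof.
move=> hx hy e; rewrite mcoeffD; case: (eqVneq (x@_e) 0) => [->|/hx //].
by rewrite add0r => /hy.
Qed.

Lemma bndZ a x : bnd x -> bnd (a *: x).
Proof.
move=> hx e; rewrite mcoeffZ; case: (eqVneq (x@_e) 0) => [->|/hx //].
by rewrite mulr0 eqxx.
Qed.

Lemma bnd_sum (I : Type) (r : seq I) (G : I -> P) : (forall i, bnd (G i)) -> bnd (\sum_(i <- r) G i).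
Proof.
move=> h; elim/big_rec: _ => [|i x _ hx]; first exact: bnd0.
exact: bndD.
Qed.

Lemma bnd_deriv e h : bnd h -> bnd (mderivm e h).
Proof.
move=> hh k; rewrite mcoeff_mderivm; case: (eqVneq (h@_(e + k)) 0) => [->|/hh].
  by rewrite mul0rn eqxx.
by move=> lt _; apply: leq_ltn_trans lt; rewrite mdegD leq_addl.
Qed.

Lemma bnd_f : bnd f.
Proof. by move=> e; rewrite -mcoeff_msupp; apply: msize_mdeg_lt. Qed.

Lemma bnd_b (a : 'I_m) : bnd b`_a.
Proof.
case: hb => _ hg _; have [s [c ->]] := hg a.
by apply: bnd_sum => j; apply/bndZ/bnd_deriv/bnd_f.
Qed.

Lemma bnd_Bc c : bnd (Bc c).
Proof. by apply: bnd_sum => j; apply/bndZ/bnd_b. Qed.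

Lemma mdeg_ge (e : 'X_{1..n}) j : (e j <= mdeg e)%N.
Proof. by rewrite mdegE (bigD1 j) //= leq_addr. Qed.

Definition rowv (e : 'X_{1..n}) : 'rV[F]_m := \row_k (mderivm e b`_k)@_0.

Lemma coef0_Bc e c : (mderivm e (Bc c))@_0 = \sum_a c a * (mderivm e b`_a)@_0.
Proof.
rewrite /Bc !raddf_sum /=; apply: eq_bigr => a _.
by rewrite mderivmZ mcoeffZ.
Qed.

Lemma rowvD (j : 'I_n) e : rowv e *m Dm j = rowv (U_(j) + e).
Proof.
apply/matrixP => i k; rewrite !mxE mderivmDm mderivmU1m Dc_spec coef0_Bc.
by apply: eq_bigr => a _; rewrite !mxE mulrC.
Qed.

Lemma rowvX (j : 'I_n) e k : rowv e *m Dm j ^+ k = rowv (U_(j) *+ k + e).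
Proof.
elim: k => [|k IH]; first by rewrite expr0 mulmx1 mulm0n add0m.
by rewrite exprSr -mulmxE mulmxA IH rowvD mulmS addmA.
Qed.

Definition Am (j : 'I_n) (k : 'I_(msize f).+1) : 'M[F]_m := (k`!%:R)^-1 *: Dm j ^+ k.

Lemma Am_comm j k j' k' : Am j k *m Am j' k' = Am j' k' *m Am j k.
Proof.
rewrite /Am -!scalemxAl -!scalemxAr !scalerA mulrC; congr (_ *: _).
rewrite !mulmxE; apply: commrX; apply/commr_sym; apply: commrX.
by rewrite /GRing.comm -!mulmxE Dm_comm.
Qed.

Lemma inl_nil (k : 'X_{1..n}) : inl [::] k = (k == 0%MM).
Proof.
apply/forallP/eqP => [H|-> i]; last by rewrite mnm0E.
by apply/mnmP => i; rewrite mnm0E; have := H i; rewrite in_nil; case: (k i).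
Qed.

Lemma Rf_nil (h : P) : Rf [::] h = (h@_0)%:MP.
Proof.
apply/mpolyP => k; rewrite Rf_coef mcoeffC inl_nil.
by case: eqP => [->|]; rewrite ?mulr1 ?mulr0.
Qed.

Lemma Rf_all (h : P) : Rf (enum 'I_n) h = h.
Proof.
apply/mpolyP => k; rewrite Rf_coef.
by have -> : inl (enum 'I_n) k by apply/forallP => i; rewrite mem_enum implybT.
Qed.

Lemma row_layer e (j : 'I_n) :
  map_mx (fun x => x%:MP) (rowv e) *m roabp_layer Am j =
  \sum_(k < (msize f).+1) ('X_j ^+ k * ((k`!%:R)^-1)%:MP) *:
      map_mx (fun x => x%:MP) (rowv (U_(j) *+ k + e)).
Proof.
apply/matrixP => i c; rewrite !mxE summxE.
under eq_bigr do rewrite !mxE mulr_sumr.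
rewrite exchange_big /=; apply: eq_bigr => k _.
rewrite [RHS]mxE [in RHS]mxE -rowvX [in RHS]mxE rmorph_sum mulr_sumr.
apply: eq_bigr => a _; rewrite /Am !mxE !rmorphM /=.
ring.
Qed.

Lemma claim (l : seq 'I_n) : uniq l -> forall e (c : 'cV[F]_m),
  (map_mx (fun x => x%:MP) (rowv e)
     *m foldr (fun M acc => M *m acc) 1%:M [seq roabp_layer Am j | j <- l]
     *m map_mx (fun x => x%:MP) c) ord0 ord0
  = Rf l (mderivm e (Bc (fun k => c k ord0))).
Proof.
elim: l => [|j l IH] /=.
  move=> _ e c; rewrite mulmx1 Rf_nil coef0_Bc !mxE rmorph_sum.
  by apply: eq_bigr => a _; rewrite !mxE rmorphM /= mulrC.
case/andP => hj hu e c.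
rewrite mulmxA row_layer !mulmx_suml summxE.
rewrite (@taylor _ _ Fchar _ _ _ (msize f)) //; last first.
  move=> e' nz; have lt := bnd_deriv (e := e) (bnd_Bc (c := fun k => c k ord0)) nz.
  exact: leq_trans (mdeg_ge e' j) (ltnW lt).
apply: eq_bigr => k _.
rewrite -!scalemxAl mxE IH // -mderivmDm addmC.
by rewrite -mulrA mul_mpolyC.
Qed.

Lemma computes : comm_roabp_computes f m.
Proof.
case: hb => _ _ hs; have [c hc] := hs 0%MM; rewrite /pderiv mderivm0m in hc.
exists (msize f), 1%g, Am, (rowv 0)^T, (\col_k c k); split; first exact: Am_comm.
rewrite /roabp_poly map_trmx trmxK.
have -> : [seq roabp_layer Am ((1%g : 'S_n) j) | j <- enum 'I_n] =
          [seq roabp_layer Am j | j <- enum 'I_n].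
  by apply: eq_map => j; rewrite perm1.
rewrite claim ?enum_uniq // mderivm0m Rf_all hc -/(Bc c).
by apply: Bc_ext => k; rewrite mxE.
Qed.

End Main.

Lemma main_generic (F : fieldType) (n : nat) (Fchar : forall k : nat, (k`!)%:R != 0 :> F)
  (f : {mpoly F[n]}) : (exists w, comm_roabp_computes f w) /\ (commRO f <= DPD f)%N.
Proof.
have [b0 hb0] := basis_exists f.
have [[b [hsz hb]] _] := natminP (Q := fun d => exists b, size b = d /\ is_pd_basis f b)
  (k := size b0) (ex_intro _ b0 (conj erefl hb0)).
have hc := computes Fchar hb.
split; first by exists (size b).
by have [_] := natminP hc; rewrite /DPD -hsz.
Qed.

Lemma Cx_char (R : realType) (k : nat) : (k`!)%:R != 0 :> Cx R.
Proof.
rewrite /Cx.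
have : (k`!)%:R != 0 :> complex R by rewrite pnatr_eq0 -lt0n fact_gt0.
by [].
Qed.

Unset Implicit Arguments.

Theorem theorem1p4 (R : realType) (n : nat) (f : {mpoly (Cx R)[n]}) :
  (exists deg : nat, f \is deg.-homog) ->
  (exists w, comm_roabp_computes f w) /\ (commRO f <= DPD f)%N.
Proof. by move=> _; apply: main_generic; apply: Cx_char. Qed.
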